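(* For every language $L$, $Q^{1}_L\mathrm{FO}(+,\times)\equiv Q^{\star}_L\mathrm{FO}(+,\times)$.
   Context: Strings as structures: a nonempty string $b_0\cdots b_{n-1}$ over the ordered alphabet $(a_1,\dots,a_s)$ is the structure with universe $\{0,\dots,n-1\}$, natural order $<$, and unary predicates $P_{a_i}=\{j:b_j=a_i\}$. FO uses $=$, $<$, these predicates, $\min,\max$, connectives, $\exists,\forall$; ''$+,\times$'' means the ternary relations $i+j=k$ and $i\cdot j=k$ are additionally built in. Monadic second-order Lindström quantifiers: for a language $L$ over $(a_1,\dots,a_s)$ and distinct unary second-order variables $\overline X=(X_1,\dots,X_k)$, over universe $\{0,\dots,n-1\}$ and an assignment $(A_1,\dots,A_k)$ let $s^i_j=1$ iff $j\in A_i$. For $Q^1_L$ the $2^{nk}$ assignments are ordered lexicographically by the interleaved code $s^1_0\cdots s^k_0s^1_1\cdots s^k_1\cdots s^1_{n-1}\cdots s^k_{n-1}$; for $Q^\star_L$ by the concatenated code $s^1_0\cdots s^1_{n-1}\cdots s^k_0\cdots s^k_{n-1}$. Then $\mathcal A\models Q\overline X[\varphi_1,\dots,\varphi_{s-1}]$ iff the word of length $2^{nk}$ whose $i$-th letter is $a_j$ for the least $j$ with $\varphi_j$ true at the $i$-th assignment (and $a_s$ if none) lies in $L$. $Q^1_L\mathrm{FO}(+,\times)$ consists of all formulas $Q^1_L\overline X[\varphi_1,\dots,\varphi_{s-1}]$ with $\varphi_i$ first-order formulas (built-in $<,+,\times$) possibly containing $\overline X$; $Q^\star_L\mathrm{FO}(+,\times)$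 likewise with $Q^\star_L$. $\mathcal L\equiv\mathcal L'$ means over every string signature every sentence of either logic has an equivalent sentence of the other. *)

(* Defs.v *)
From mathcomp Require Import all_boot.
Set Implicit Arguments. Unset Strict Implicit. Unset Printing Implicit Defensive.

Inductive term := TVar of nat | TMin | TMax.

(* formulas over the string signature with alphabet 'I_t (letters a_1..a_t
   are the ordinals 0..t-1).  FSO X x is the atom "X_X(x)" for the
   second-order (monadic) variable number X. *)
Inductive form (t : nat) : Type :=
| FEq    of term & term
| FLt    of term & term
| FLet   of 'I_t & term
| FSO    of nat & term
| FPlus  of term & term & term
| FTimes of term & term & term
| FNot   of form t
| FAnd   of form t & form t
| FOr    of form t & form t
| FEx    of nat & form t
| FAll   of nat & form t.

Definition upd (V : nat -> nat) (x d : nat) : nat -> nat :=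
  fun y => if y == x then d else V y.

Definition tval (n : nat) (V : nat -> nat) (u : term) : nat :=
  match u with TVar x => V x | TMin => 0 | TMax => n.-1 end.

(* Satisfaction in the string structure w (universe {0,..,size w - 1});
   V assigns first-order variables, S m j = (j \in X_m). *)
Fixpoint eval (t : nat) (w : seq 'I_t) (V : nat -> nat)
    (S : nat -> nat -> bool) (f : form t) : bool :=
  let n := size w in
  let tv := tval n V in
  match f with
  | FEq a b => tv a == tv b
  | FLt a b => tv a < tv b
  | FLet c a => nth None (map Some w) (tv a) == Some c
  | FSO m a => S m (tv a)
  | FPlus a b c => tv a + tv b == tv c
  | FTimes a b c => tv a * tv b == tv c
  | FNot g => ~~ eval w V S g
  | FAnd g h => eval w V S g && eval w V S h
  | FOr g h => eval w V S g || eval w V S h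
  | FEx x g => has (fun d => eval w (upd V x d) S g) (iota 0 n)
  | FAll x g => all (fun d => eval w (upd V x d) S g) (iota 0 n)
  end.

Definition term_ok (bnd : seq nat) (u : term) : bool :=
  match u with TVar x => x \in bnd | _ => true end.

Fixpoint fo_closed (t : nat) (bnd : seq nat) (f : form t) : bool :=
  match f with
  | FEq a b | FLt a b => term_ok bnd a && term_ok bnd b
  | FLet _ a | FSO _ a => term_ok bnd a
  | FPlus a b c | FTimes a b c => [&& term_ok bnd a, term_ok bnd b & term_ok bnd c]
  | FNot g => fo_closed bnd g
  | FAnd g h | FOr g h => fo_closed bnd g && fo_closed bnd h
  | FEx x g | FAll x g => fo_closed (x :: bnd) g
  end.

Fixpoint so_bound (t : nat) (k : nat) (f : form t) : bool :=
  match f with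
  | FSO m _ => m < k
  | FNot g | FEx _ g | FAll _ g => so_bound k g
  | FAnd g h | FOr g h => so_bound k g && so_bound k h
  | _ => true
  end.

(* A sentence  Q X_0..X_(k-1) [phi_1, ..., phi_s]  for a language over the
   ordered alphabet 'I_s.+1 (letters a_1..a_(s+1)); the phi_i are
   first-order formulas with no free first-order variables whose only
   second-order variables are among X_0..X_(k-1). *)
Record qsent (s t : nat) := QSent { qk : nat ; qphis : s.-tuple (form t) }.

Definition qsent_wf (s t : nat) (q : qsent s t) : bool :=
  all (fun phi => fo_closed [::] phi && so_bound (qk q) phi) (qphis q).

(* The i-th bit string of length N in lexicographic order (i < 2^N),
   i.e. the N-digit binary expansion of i, most significant digit first. *)
Definition lex_bits (N i : nat) : seq bool :=
  [seq odd (i %/ 2 ^ (N.-1 - p)) | p <- iota 0 N].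

Inductive qmode := Interleaved | Concatenated.

(* Interleaved (Q^1): s^1_0..s^k_0 s^1_1 ... ;
   concatenated (Q^star): s^1_0..s^1_(n-1) ... s^k_0..s^k_(n-1). *)
Definition decode (md : qmode) (n k : nat) (code : seq bool) : nat -> nat -> bool :=
  fun m j => [&& m < k, j < n &
     nth false code (match md with Interleaved => j * k + m
                                 | Concatenated => m * n + j end)].

Definition qword (md : qmode) (s t : nat) (w : seq 'I_t) (q : qsent s t)
    : seq 'I_s.+1 :=
  let n := size w in
  let k := qk q in
  [seq (inord (find id [seq eval w (fun _ => 0)
                           (decode md n k (lex_bits (n * k) i)) phi
                       | phi <- qphis q]) : 'I_s.+1)
  | i <- iota 0 (2 ^ (n * k))].

Definition qsat (md : qmode) (s t : nat) (L : seq 'I_s.+1 -> Prop)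
    (w : seq 'I_t) (q : qsent s t) : Prop :=
  L (qword md w q).

Definition qlogic_le (md md' : qmode) (s : nat) (L : seq 'I_s.+1 -> Prop) : Prop :=
  forall (t : nat) (q : qsent s t), qsent_wf q ->
    exists q' : qsent s t, qsent_wf q' /\
      forall w : seq 'I_t, 0 < size w -> (qsat md L w q <-> qsat md' L w q').

Definition qlogic_equiv (md md' : qmode) (s : nat) (L : seq 'I_s.+1 -> Prop) : Prop :=
  qlogic_le md md' L /\ qlogic_le md' md L.

(* Main.v *)
Require Import Defs.
From mathcomp Require Import all_boot.
From mathcomp Require Import zify.
Set Implicit Arguments. Unset Strict Implicit. Unset Printing Implicit Defensive.

Definition term_lt (b : nat) (u : term) : bool :=
  match u with TVar x => x < b | _ => true end.

Definition ffalse t : form t := FNot (FEq t TMin TMin).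

Definition succf t (y x : term) (b : nat) : form t :=
  FAnd (FLt t y x) (FAll b (FNot (FAnd (FLt t y (TVar b)) (FLt t (TVar b) x)))).

Arguments succf : simpl never.

Definition ovadd t (y u x : term) (b : nat) : form t :=
  FEx b (FEx b.+1 (FAnd (FPlus t (TVar b) y TMax)
     (FAnd (FPlus t x (TVar b) (TVar b.+1)) (succf t (TVar b.+1) u b.+2)))).

Lemma tval_upd (b : nat) (u : term) : term_lt b u -> forall (n : nat) (V : nat -> nat) (b' y : nat), b <= b' -> Defs.tval n (upd V b' y) u = Defs.tval n V u.
Proof. case: u => //= x xb n V b' y bb'; rewrite /upd; case: eqP => // ?; lia. Qed.

Lemma tval_lt (n : nat) (V : nat -> nat) (u : term) : 0 < n -> (forall x, V x < n) -> Defs.tval n V u < n.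
Proof. case: u => //= *; lia. Qed.

Lemma term_lt_le b b' u : term_lt b u -> b <= b' -> term_lt b' u.
Proof. case: u => //= x; lia. Qed.

Lemma upd_lt (n : nat) (V : nat -> nat) (x d : nat) : (forall y, V y < n) -> d < n -> forall y, upd V x d y < n.
Proof. by move=> HV hd y; rewrite /upd; case: eqP. Qed.

Lemma hasiotaP (p : pred nat) n : reflect (exists2 d, d < n & p d) (has p (iota 0 n)).
Proof.
apply: (iffP hasP) => [[d]|[d]].
- rewrite mem_iota /= add0n => ? ?; by exists d.
- move=> ? ?; exists d => //; by rewrite mem_iota.
Qed.

Lemma alliotaP (p : pred nat) n : reflect (forall d, d < n -> p d) (all p (iota 0 n)).
Proof.
apply: (iffP allP) => H d.
- move=> dn; apply: H; by rewrite mem_iota.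
- rewrite mem_iota /= add0n; auto.
Qed.

Section EvalEq.
Lemma eval_ex t (w : seq 'I_t) V S x f : eval w V S (FEx x f) = has (fun d => eval w (upd V x d) S f) (iota 0 (size w)).
Proof. by []. Qed.
Lemma eval_all t (w : seq 'I_t) V S x f : eval w V S (FAll x f) = all (fun d => eval w (upd V x d) S f) (iota 0 (size w)).
Proof. by []. Qed.
Lemma eval_and t (w : seq 'I_t) V S f g : eval w V S (FAnd f g) = eval w V S f && eval w V S g.
Proof. by []. Qed.
Lemma eval_or t (w : seq 'I_t) V S f g : eval w V S (FOr f g) = eval w V S f || eval w V S g.
Proof. by []. Qed.
Lemma eval_plus t (w : seq 'I_t) V S a b c : eval w V S (FPlus t a b c) = (Defs.tval (size w) V a + Defs.tval (size w) V b == Defs.tval (size w) V c).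
Proof. by []. Qed.
Lemma eval_eq t (w : seq 'I_t) V S a b : eval w V S (FEq t a b) = (Defs.tval (size w) V a == Defs.tval (size w) V b).
Proof. by []. Qed.
Lemma eval_so t (w : seq 'I_t) V S m a : eval w V S (FSO t m a) = S m (Defs.tval (size w) V a).
Proof. by []. Qed.
Lemma eval_false t (w : seq 'I_t) V S : eval w V S (ffalse t) = false.
Proof. by []. Qed.
End EvalEq.

Lemma succf_sem t (w : seq 'I_t) V S y x b :
  0 < size w -> (forall z, V z < size w) -> term_lt b y -> term_lt b x ->
  eval w V S (succf t y x b) = (Defs.tval (size w) V x == (Defs.tval (size w) V y).+1).
Proof.
move=> n0 HV hy hx /=.
have := tval_lt y n0 HV; have := tval_lt x n0 HV.
set X := Defs.tval _ V x; set Y := Defs.tval _ V y => hX hY.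
apply/andP/idP.
- case=> hlt /alliotaP H; apply/negPn/negP => hne.
  have := H Y.+1 ltac:(lia); rewrite /= (tval_upd hy) ?(tval_upd hx) // /upd eqxx -/X -/Y; lia.
- move/eqP=> hXY; split; first by rewrite hXY ltnSn.
  apply/alliotaP => d _; rewrite /= (tval_upd hy) ?(tval_upd hx) // /upd eqxx -/X -/Y; apply/negP; lia.
Qed.

Lemma ovadd_sem t (w : seq 'I_t) V S y u x b :
  0 < size w -> (forall z, V z < size w) -> term_lt b y -> term_lt b u -> term_lt b x ->
  eval w V S (ovadd t y u x b) = (Defs.tval (size w) V y + Defs.tval (size w) V u == Defs.tval (size w) V x + size w).
Proof.
move=> n0 HV hy hu hx; rewrite /ovadd eval_ex.
have := tval_lt y n0 HV; have := tval_lt x n0 HV; have := tval_lt u n0 HV.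
set X := Defs.tval _ V x; set Y := Defs.tval _ V y; set U := Defs.tval _ V u => hU hX hY.
apply/hasiotaP/idP.
- case=> a ha; rewrite eval_ex => /hasiotaP [e he].
  have HV2 : forall z, upd (upd V b a) b.+1 e z < size w by apply: upd_lt => //; apply: upd_lt.
  rewrite eval_and (eval_and _ _ _ (FPlus _ _ _ _) (succf _ _ _ _)) !eval_plus succf_sem //=; last by apply: (term_lt_le hu); lia.
  rewrite ?(tval_upd hy) ?(tval_upd hu) ?(tval_upd hx) // /upd /= !eqxx.
  rewrite (_ : (b == b.+1) = false); last by lia.
  rewrite -/X -/Y -/U.
  case/and3P => h1 h2 h3; lia.
- move=> /eqP H; exists ((size w).-1 - Y); first lia.
  rewrite eval_ex; apply/hasiotaP; exists (X + ((size w).-1 - Y)); first lia.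
  have HV2 : forall z, upd (upd V b ((size w).-1 - Y)) b.+1 (X + ((size w).-1 - Y)) z < size w.
    by apply: upd_lt; [apply: upd_lt => //; lia | lia].
  rewrite eval_and (eval_and _ _ _ (FPlus _ _ _ _) (succf _ _ _ _)) !eval_plus succf_sem //=; last by apply: (term_lt_le hu); lia.
  rewrite ?(tval_upd hy) ?(tval_upd hu) ?(tval_upd hx) // /upd /= !eqxx.
  rewrite (_ : (b == b.+1) = false); last by lia.
  rewrite -/X -/Y -/U.
  apply/and3P; split; apply/eqP; lia.
Qed.
Arguments ovadd : simpl never.

Lemma term_lt_S b : term_lt b.+1 (TVar b).
Proof. exact: ltnSn. Qed.
#[global] Hint Resolve term_lt_S : core.

Fixpoint lin0 t (d h : nat) (x : term) (b : nat) : form t :=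
  match d with
  | 0 => if h == 0 then FEq t x TMin else ffalse t
  | d'.+1 => FEx b (FOr (FAnd (lin0 t d' h (TVar b) b.+1) (succf t (TVar b) x b.+1))
                   (if h is h'.+1 then FAnd (lin0 t d' h' (TVar b) b.+1)
                        (FAnd (FEq t (TVar b) TMax) (FEq t x TMin)) else ffalse t))
  end.

Fixpoint lin t (c d h : nat) (u x : term) (b : nat) : form t :=
  match c with
  | 0 => lin0 t d h x b
  | c'.+1 => FEx b (FOr (FAnd (lin t c' d h u (TVar b) b.+1) (FPlus t (TVar b) u x))
                   (if h is h'.+1 then FAnd (lin t c' d h' u (TVar b) b.+1) (ovadd t (TVar b) u x b.+1)
                    else ffalse t))
  end.

Lemma divmod_uniq n a b r s : r < n -> s < n -> a * n + r = b * n + s -> a = b.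
Proof.
move=> rn sn E.
have n0 : 0 < n by lia.
have := congr1 (fun z => z %/ n) E => /=.
by rewrite !divnMDl // !divn_small // !addn0.
Qed.

Lemma lin0_sem t (w : seq 'I_t) V S d h x b :
  0 < size w -> (forall z, V z < size w) -> term_lt b x ->
  eval w V S (lin0 t d h x b) = (d == h * size w + Defs.tval (size w) V x).
Proof.
elim: d h x b V => [|d IH] h x b V n0 HV hx.
- rewrite /lin0; case: h => [|h] /=.
  + by rewrite mul0n add0n eq_sym.
  + apply/esym/negbTE; lia.
- have hX := tval_lt x n0 HV.
  rewrite /lin0 -/lin0 eval_ex; apply/hasiotaP/idP.
  + case=> y hy; rewrite eval_or eval_and.
    have HV2 : forall z, upd V b y z < size w by apply: upd_lt.
    rewrite IH //. rewrite (@succf_sem t w (upd V b y) S (TVar b) x b.+1) //; last by apply: (term_lt_le hx); lia.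
    rewrite (tval_upd hx) //= /upd eqxx.
    case/orP => [/andP [/eqP e1 /eqP e2]|]; first lia.
    case: h => [|h]; first by rewrite eval_false.
    rewrite eval_and eval_and !eval_eq IH //= (tval_upd hx) // /upd eqxx.
    case/and3P => /eqP e1 /eqP e2 /eqP e3; rewrite mulSn; lia.
  + move/eqP=> E.
    have HV2 : forall y, y < size w -> forall z, upd V b y z < size w by move=> *; apply: upd_lt.
    case: (posnP (Defs.tval (size w) V x)) => Xp.
    * case: h E => [|h] E; first lia.
      exists (size w).-1; first lia.
      rewrite eval_or; apply/orP; right.
      rewrite eval_and eval_and !eval_eq IH //=; last by apply: HV2; lia.
      rewrite (tval_upd hx) // /upd eqxx Xp; apply/and3P; split => //; apply/eqP; rewrite mulSn in E; lia.
    * exists (Defs.tval (size w) V x).-1; first lia.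
      rewrite eval_or eval_and IH //; last by apply: HV2; lia.
      have HV3 := HV2 (Defs.tval (size w) V x).-1 ltac:(lia).
      rewrite (@succf_sem t w (upd V b _) S (TVar b) x b.+1) //; last by apply: (term_lt_le hx); lia.
      rewrite (tval_upd hx) //= /upd eqxx; apply/orP; left; apply/andP; split; apply/eqP; lia.
Qed.

Lemma lin_sem t (w : seq 'I_t) V S c d h u x b :
  0 < size w -> (forall z, V z < size w) -> term_lt b u -> term_lt b x ->
  eval w V S (lin t c d h u x b) =
  (c * Defs.tval (size w) V u + d == h * size w + Defs.tval (size w) V x).
Proof.
elim: c h x b V => [|c IH] h x b V n0 HV hu hx.
- by rewrite /lin lin0_sem // mul0n add0n.
- have hX := tval_lt x n0 HV; have hU := tval_lt u n0 HV.
  have HV2 : forall y, y < size w -> forall z, upd V b y z < size w by move=> *; apply: upd_lt.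
  have hu' : term_lt b.+1 u by apply: (term_lt_le hu); lia.
  have hx' : term_lt b.+1 x by apply: (term_lt_le hx); lia.
  rewrite /lin -/lin eval_ex; apply/hasiotaP/idP.
  + case=> y hy; rewrite eval_or eval_and eval_plus IH //; last exact: HV2.
    rewrite (tval_upd hx) // (tval_upd hu) //= /upd eqxx.
    case/orP => [/andP [/eqP e1 /eqP e2]|]; first by rewrite mulSn; apply/eqP; lia.
    case: h => [|h]; first by rewrite eval_false.
    rewrite eval_and IH //; last exact: HV2.
    rewrite (@ovadd_sem t w (upd V b y) S (TVar b) u x b.+1) //; last exact: HV2.
    rewrite (tval_upd hx) // (tval_upd hu) //= /upd eqxx.
    case/andP => /eqP e1 /eqP e2; apply/eqP; rewrite mulSn [h.+1 * _]mulSn; lia.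
  + move/eqP=> E.
    set U := Defs.tval (size w) V u in E hU *; set X := Defs.tval (size w) V x in E hX *.
    have n0' := n0.
    set y := (c * U + d) %% size w; set h' := (c * U + d) %/ size w.
    have Ey : c * U + d = h' * size w + y by rewrite /y /h' -divn_eq.
    have hy : y < size w by rewrite /y ltn_mod.
    exists y => //.
    rewrite eval_or eval_and eval_plus IH //; last exact: HV2.
    rewrite (tval_upd hx) // (tval_upd hu) //= /upd eqxx -/U -/X.
    case: (ltnP (y + U) (size w)) => hyU.
    * have hh : h' = h.
        apply: (@divmod_uniq (size w) _ _ (y + U) X) => //; rewrite mulSn in E; lia.
      apply/orP; left; apply/andP; split; apply/eqP; [lia|].
      rewrite mulSn in E; subst h'; lia.
    * have hh : h' .+1 = h.
        apply: (@divmod_uniq (size w) _ _ (y + U - size w) X) => //; try lia.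
      case: h hh E => [|h] // [hh] E; subst h'.
      apply/orP; right.
      rewrite eval_and IH //; last exact: HV2.
      rewrite (@ovadd_sem t w (upd V b y) S (TVar b) u x b.+1) //; last exact: HV2.
      rewrite (tval_upd hx) // (tval_upd hu) //= /upd eqxx -/U -/X.
      apply/andP; split; apply/eqP; rewrite mulSn in E; lia.
Qed.

Lemma term_ok_cons bnd b u : term_ok bnd u -> term_ok (b :: bnd) u.
Proof. case: u => //= x hx; by rewrite in_cons hx orbT. Qed.

Lemma succf_fo t bnd y x b : term_ok bnd y -> term_ok bnd x -> fo_closed bnd (succf t y x b).
Proof. by move=> hy hx; rewrite /succf /= hy hx /= in_cons eqxx !term_ok_cons. Qed.

Lemma ovadd_fo t bnd y u x b : term_ok bnd y -> term_ok bnd u -> term_ok bnd x ->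
  fo_closed bnd (ovadd t y u x b).
Proof.
move=> hy hu hx; rewrite /ovadd /= !in_cons !eqxx /= !orbT !term_ok_cons //=.
Qed.

Lemma lin0_fo t bnd d h x b : term_ok bnd x -> fo_closed bnd (lin0 t d h x b).
Proof.
elim: d h x b bnd => [|d IH] h x b bnd hx /=.
- by case: h => [|h] /=; rewrite ?hx.
- rewrite IH /=; last by rewrite in_cons eqxx.
  rewrite ?in_cons ?eqxx ?orbT ?term_ok_cons //=.
  case: h => [|h] //=; rewrite IH /= ?in_cons ?eqxx //=.
  by rewrite term_ok_cons.
Qed.

Lemma lin_fo t bnd c d h u x b : term_ok bnd u -> term_ok bnd x -> fo_closed bnd (lin t c d h u x b).
Proof.
elim: c h x b bnd => [|c IH] h x b bnd hu hx /=; first exact: lin0_fo.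
rewrite IH /= ?in_cons ?eqxx ?term_ok_cons //=.
case: h => [|h] //=; rewrite IH /= ?in_cons ?eqxx ?term_ok_cons //=.
by rewrite !orbT.
Qed.

Lemma lin0_so t k d h x b : so_bound k (lin0 t d h x b).
Proof. elim: d h x b => [|d IH] [|h] x b //=; rewrite !IH //. Qed.

Lemma lin_so t k c d h u x b : so_bound k (lin t c d h u x b).
Proof.
elim: c h x b => [|c IH] h x b /=; first exact: lin0_so.
by case: h => [|h] /=; rewrite !IH.
Qed.

Fixpoint substF t (G : nat -> term -> form t) (f : form t) : form t :=
  match f with
  | FSO m a => G m a
  | FNot g => FNot (substF G g)
  | FAnd g h => FAnd (substF G g) (substF G h)
  | FOr g h => FOr (substF G g) (substF G h)
  | FEx x g => FEx x (substF G g)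
  | FAll x g => FAll x (substF G g)
  | _ => f
  end.

Fixpoint sov t (f : form t) : nat :=
  match f with
  | FSO _ (TVar x) => x.+1
  | FNot g | FEx _ g | FAll _ g => sov g
  | FAnd g h | FOr g h => maxn (sov g) (sov h)
  | _ => 0
  end.

Lemma subst_eval t (w : seq 'I_t) S S' (G : nat -> term -> form t) b :
  0 < size w ->
  (forall V, (forall z, V z < size w) -> forall m a, term_lt b a ->
     eval w V S' (G m a) = S m (Defs.tval (size w) V a)) ->
  forall f V, sov f <= b -> (forall z, V z < size w) ->
  eval w V S' (substF G f) = eval w V S f.
Proof.
move=> n0 HG; elim=> //=.
- move=> m a V hb HV; rewrite HG //; case: a hb => //=.
- by move=> g IH V hb HV; rewrite IH.
- move=> g IHg h IHh V hb HV; rewrite IHg ?IHh //; lia.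
- move=> g IHg h IHh V hb HV; rewrite IHg ?IHh //; lia.
- move=> x g IH V hb HV; apply: eq_in_has => d; rewrite mem_iota add0n => /andP [_ hd].
  apply: IH => //; exact: upd_lt.
- move=> x g IH V hb HV; apply: eq_in_all => d; rewrite mem_iota add0n => /andP [_ hd].
  apply: IH => //; exact: upd_lt.
Qed.

Lemma subst_fo t (G : nat -> term -> form t) :
  (forall bnd m a, term_ok bnd a -> fo_closed bnd (G m a)) ->
  forall f bnd, fo_closed bnd f -> fo_closed bnd (substF G f).
Proof.
move=> HG; elim=> //=.
all: try (by move=> m a bnd; apply: HG); try (by move=> g IH bnd /IH);
  try (by move=> x g IH bnd /IH); by move=> g IHg h IHh bnd /andP [/IHg -> /IHh ->].
Qed.

Lemma subst_so t k (G : nat -> term -> form t) :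
  (forall m a, so_bound k (G m a)) -> forall f, so_bound k (substF G f).
Proof. by move=> HG; elim=> //= g -> h ->. Qed.

Lemma sov_all t (s : seq (form t)) : all (fun phi => sov phi <= foldr maxn 0 (map (@sov t) s)) s.
Proof.
elim: s => //= p s IH; apply/andP; split; first lia.
apply: sub_all IH => phi /=; lia.
Qed.

Lemma map_all_eq (T : Type) (f g : T -> bool) s : all (fun x => f x == g x) s -> map f s = map g s.
Proof. by elim: s => //= x s IH /andP [/eqP -> /IH ->]. Qed.

Lemma le_gen md md' s (L : seq 'I_s.+1 -> Prop)
  (Gb : forall t, nat -> nat -> nat -> term -> form t) :
  (forall t k b bnd m a, term_ok bnd a -> fo_closed bnd (Gb t k b m a)) ->
  (forall t k b m a, so_bound k (Gb t k b m a)) ->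
  (forall t (w : seq 'I_t) k b code V m a, 0 < size w -> (forall z, V z < size w) -> term_lt b a ->
     eval w V (decode md' (size w) k code) (Gb t k b m a)
     = decode md (size w) k code m (Defs.tval (size w) V a)) ->
  qlogic_le md md' L.
Proof.
move=> Hfo Hso Hsem t q wfq.
set k := qk q; set b := foldr maxn 0 (map (@sov t) (qphis q)).
exists (QSent k (map_tuple (substF (Gb t k b)) (qphis q))); split.
- rewrite /qsent_wf /= all_map; apply: sub_all wfq => phi /= /andP [h1 h2].
  apply/andP; split; [exact: (subst_fo (Hfo t k b) h1) | exact: (subst_so (Hso t k b))].
- move=> w n0; rewrite /qsat /qword /=.
  suff -> : [seq (inord (find id [seq eval w (fun=> 0)
                 (decode md' (size w) k (lex_bits (size w * k) i)) phi
                 | phi <- map (substF (Gb t k b)) (qphis q)]) : 'I_s.+1)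
             | i <- iota 0 (2 ^ (size w * k))] =
     [seq (inord (find id [seq eval w (fun=> 0)
                 (decode md (size w) (qk q) (lex_bits (size w * qk q) i)) phi
                 | phi <- qphis q]) : 'I_s.+1)
             | i <- iota 0 (2 ^ (size w * qk q))] by [].
  apply: eq_map => i; congr (inord (find id _)).
  rewrite -map_comp; apply: map_all_eq.
  apply: sub_all (sov_all (qphis q)) => phi /= hphi; apply/eqP.
  apply: (@subst_eval t w _ _ _ b) => //.
  move=> V HV m a ha; exact: Hsem.
Qed.

Definition bigor t (fs : seq (form t)) : form t := foldr (@FOr t) (ffalse t) fs.

Lemma eval_bigor t (w : seq 'I_t) V S fs : eval w V S (bigor fs) = has (eval w V S) fs.
Proof. by elim: fs => //= f fs <-. Qed.

Lemma fo_bigor t bnd (fs : seq (form t)) : all (fo_closed bnd) fs -> fo_closed bnd (bigor fs).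
Proof. by elim: fs => //= f fs IH /andP [-> /IH]. Qed.

Lemma so_bigor t k (fs : seq (form t)) : all (so_bound k) fs -> so_bound k (bigor fs).
Proof. by elim: fs => //= f fs IH /andP [-> /IH]. Qed.

Definition G1 t (k b m : nat) (a : term) : form t :=
  if m < k then bigor [seq FEx b (FAnd (lin t k m q a (TVar b) b.+1) (FSO t q (TVar b))) | q <- iota 0 k]
  else ffalse t.

Definition G2 t (k b m : nat) (a : term) : form t :=
  if m < k then bigor [seq FEx b (FAnd (lin t k q m (TVar b) a b.+1) (FSO t q (TVar b))) | q <- iota 0 k]
  else ffalse t.

Lemma G1_fo t k b bnd m a : term_ok bnd a -> fo_closed bnd (G1 t k b m a).
Proof.
move=> ha; rewrite /G1; case: (m < k) => //.
apply: fo_bigor; rewrite all_map; apply/allP => q _ /=.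
rewrite lin_fo /=; rewrite ?in_cons ?eqxx //; exact: term_ok_cons.
Qed.

Lemma G2_fo t k b bnd m a : term_ok bnd a -> fo_closed bnd (G2 t k b m a).
Proof.
move=> ha; rewrite /G2; case: (m < k) => //.
apply: fo_bigor; rewrite all_map; apply/allP => q _ /=.
rewrite lin_fo /=; rewrite ?in_cons ?eqxx //; exact: term_ok_cons.
Qed.

Lemma G1_so t k b m a : so_bound k (G1 t k b m a).
Proof.
rewrite /G1; case: (m < k) => //.
apply: so_bigor; rewrite all_map; apply/allP => q; rewrite mem_iota /= => hq.
by rewrite lin_so /=; lia.
Qed.

Lemma G2_so t k b m a : so_bound k (G2 t k b m a).
Proof.
rewrite /G2; case: (m < k) => //.
apply: so_bigor; rewrite all_map; apply/allP => q; rewrite mem_iota /= => hq.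
by rewrite lin_so /=; lia.
Qed.

Lemma G1_sem t (w : seq 'I_t) k b code V m a :
  0 < size w -> (forall z, V z < size w) -> term_lt b a ->
  eval w V (decode Concatenated (size w) k code) (G1 t k b m a)
  = decode Interleaved (size w) k code m (Defs.tval (size w) V a).
Proof.
move=> n0 HV ha; rewrite /G1 /decode.
case: (ltnP m k) => mk /=; last by [].
have hA := tval_lt a n0 HV; set A := Defs.tval _ V a in hA *.
rewrite hA /= eval_bigor has_map.
have ha' : term_lt b.+1 a by apply: (term_lt_le ha); lia.
apply/hasiotaP/idP.
  case=> q hq /= /hasiotaP [r hr].
  rewrite lin_sem //; last by apply: upd_lt.
  rewrite (tval_upd ha) // /upd eqxx -/A.
  case/and4P => /eqP E _ _ hc.
  by move: E; rewrite /= eqxx (mulnC A) => ->.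
- move=> hc; set N := A * k + m.
  have hN : N < k * size w by rewrite /N; nia.
  exists (N %/ size w); first by rewrite ltn_divLR // mulnC.
  rewrite /=; apply/hasiotaP; exists (N %% size w); first by rewrite ltn_mod.
  rewrite lin_sem //; last by apply: upd_lt => //; rewrite ltn_mod.
  rewrite (tval_upd ha) // /upd eqxx -/A ltn_mod n0 /=.
  rewrite ltn_divLR // mulnC hN /= -divn_eq.
  by rewrite eqxx -divn_eq /N eqxx -/N hc.
Qed.

Lemma G2_sem t (w : seq 'I_t) k b code V m a :
  0 < size w -> (forall z, V z < size w) -> term_lt b a ->
  eval w V (decode Interleaved (size w) k code) (G2 t k b m a)
  = decode Concatenated (size w) k code m (Defs.tval (size w) V a).
Proof.
move=> n0 HV ha; rewrite /G2 /decode.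
case: (ltnP m k) => mk /=; last by [].
have hA := tval_lt a n0 HV; set A := Defs.tval _ V a in hA *.
rewrite hA /= eval_bigor has_map.
have ha' : term_lt b.+1 a by apply: (term_lt_le ha); lia.
have k0 : 0 < k by lia.
apply/hasiotaP/idP.
- case=> q hq /= /hasiotaP [r hr].
  rewrite lin_sem //; last by apply: upd_lt.
  rewrite (tval_upd ha) // /upd eqxx -/A.
  case/and4P => /eqP E _ _ hc.
  by move: E; rewrite /= eqxx (mulnC k) => <-.
- move=> hc; set N := m * size w + A.
  have hN : N < size w * k by rewrite /N; nia.
  exists (N %% k); first by rewrite ltn_mod.
  rewrite /=; apply/hasiotaP; exists (N %/ k); first by rewrite ltn_divLR.
  rewrite lin_sem //; last by apply: upd_lt => //; rewrite ltn_divLR.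
  rewrite (tval_upd ha) // /upd eqxx -/A ltn_mod k0 /=.
  rewrite ltn_divLR // hN /= mulnC -divn_eq.
  by rewrite eqxx -divn_eq /N eqxx -/N hc.
Qed.

Unset Implicit Arguments.

Theorem proposition2p7 (s : nat) (L : seq 'I_s.+1 -> Prop) :
  qlogic_equiv Interleaved Concatenated L.
Proof.
split.
- apply: (@le_gen _ _ _ _ (fun t => @G1 t)); [exact: G1_fo | exact: G1_so | exact: G1_sem].
- apply: (@le_gen _ _ _ _ (fun t => @G2 t)); [exact: G2_fo | exact: G2_so | exact: G2_sem].
Qed.
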